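(* Every Eulerian map is edge-wise Eulerian: if $X$ is a Peano continuum and $g:S^1\to X$ is a continuous surjection such that $g(A)\neq X$ for every closed $A\subsetneq S^1$, then $g^{-1}(x)$ is a singleton for every point $x$ lying in a free arc of $X$.
   Context: A Peano continuum is a compact, connected, locally connected metrizable space. A free arc of $X$ is an inclusion-maximal open subset of $X$ homeomorphic to $(0,1)$. *)

(* Defs.v *)
From Stdlib Require Import Reals Lra List.
Open Scope R_scope.

Definition is_metric {T : Type} (d : T -> T -> R) : Prop :=
  (forall x y, 0 <= d x y) /\
  (forall x y, d x y = 0 <-> x = y) /\
  (forall x y, d x y = d y x) /\
  (forall x y z, d x z <= d x y + d y z).

Definition mopen {T : Type} (d : T -> T -> R) (U : T -> Prop) : Prop :=
  forall x, U x -> exists eps, 0 < eps /\ forall y, d x y < eps -> U y.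

Definition mclosed {T : Type} (d : T -> T -> R) (A : T -> Prop) : Prop :=
  mopen d (fun x => ~ A x).

Definition mcompact_space {T : Type} (d : T -> T -> R) : Prop :=
  forall (I : Type) (U : I -> T -> Prop),
    (forall i, mopen d (U i)) -> (forall x, exists i, U i x) ->
    exists l : list I, forall x, exists i, In i l /\ U i x.

Definition mconnected_set {T : Type} (d : T -> T -> R) (A : T -> Prop) : Prop :=
  forall U V : T -> Prop, mopen d U -> mopen d V ->
    (forall x, A x -> U x \/ V x) ->
    (forall x, A x -> U x -> V x -> False) ->
    (exists x, A x /\ U x) -> (exists x, A x /\ V x) -> False.

Definition connected_space {T : Type} (d : T -> T -> R) : Prop :=
  mconnected_set d (fun _ => True).

Definition locally_connected {T : Type} (d : T -> T -> R) : Prop :=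
  forall (x : T) (U : T -> Prop), mopen d U -> U x ->
    exists V, mopen d V /\ mconnected_set d V /\ V x /\ (forall y, V y -> U y).

Definition peano_continuum {T : Type} (d : T -> T -> R) : Prop :=
  is_metric d /\ mcompact_space d /\ connected_space d /\ locally_connected d.

Definition mcontinuous {S T : Type} (dS : S -> S -> R) (dT : T -> T -> R)
  (f : S -> T) : Prop :=
  forall x eps, 0 < eps -> exists delta, 0 < delta /\
    forall y, dS x y < delta -> dT (f x) (f y) < eps.

Definition S1 : Type := { p : R * R | fst p ^ 2 + snd p ^ 2 = 1 }.

Definition dS1 (p q : S1) : R :=
  sqrt ((fst (proj1_sig p) - fst (proj1_sig q)) ^ 2 +
        (snd (proj1_sig p) - snd (proj1_sig q)) ^ 2).

Definition homeomorphic_to_open_interval {T : Type} (d : T -> T -> R)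
  (U : T -> Prop) : Prop :=
  exists h : R -> T,
    (forall t, 0 < t < 1 -> U (h t)) /\
    (forall x, U x -> exists t, 0 < t < 1 /\ h t = x) /\
    (forall s t, 0 < s < 1 -> 0 < t < 1 -> h s = h t -> s = t) /\
    (forall t eps, 0 < t < 1 -> 0 < eps -> exists delta, 0 < delta /\
       forall s, 0 < s < 1 -> Rabs (s - t) < delta -> d (h t) (h s) < eps) /\
    (forall t eps, 0 < t < 1 -> 0 < eps -> exists delta, 0 < delta /\
       forall s, 0 < s < 1 -> d (h t) (h s) < delta -> Rabs (s - t) < eps).

Definition free_arc {T : Type} (d : T -> T -> R) (U : T -> Prop) : Prop :=
  mopen d U /\ homeomorphic_to_open_interval d U /\
  forall V, mopen d V -> homeomorphic_to_open_interval d V ->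
    (forall x, U x -> V x) -> (forall x, V x -> U x).

(* Main.v *)
Require Import Defs.
From Stdlib Require Import Reals Lra Psatz ProofIrrelevance Classical ClassicalEpsilon.
Open Scope R_scope.

Lemma S1_eq (p q : S1) : proj1_sig p = proj1_sig q -> p = q.
Proof. destruct p as [p Hp], q as [q Hq]; simpl; intros ->. f_equal; apply proof_irrelevance. Qed.

Lemma sc (t : R) : cos t ^ 2 + sin t ^ 2 = 1.
Proof. pose proof (sin2_cos2 t). unfold Rsqr in H. lra. Qed.

Definition rot (z : S1) (t : R) : S1.
Proof.
  refine (exist _ (fst (proj1_sig z) * cos t - snd (proj1_sig z) * sin t,
                   fst (proj1_sig z) * sin t + snd (proj1_sig z) * cos t) _).
  destruct z as [[a b] H]; cbn [fst snd proj1_sig] in *.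
  replace ((a * cos t - b * sin t) ^ 2 + (a * sin t + b * cos t) ^ 2)
    with ((a^2+b^2) * (cos t ^ 2 + sin t ^ 2)) by ring.
  rewrite H, sc. ring.
Defined.

Lemma rot0 z : rot z 0 = z.
Proof. apply S1_eq. destruct z as [[a b] H]; unfold rot; cbn [fst snd proj1_sig]. rewrite cos_0, sin_0. f_equal; ring. Qed.

Lemma rot_rot z q t : rot (rot z q) t = rot z (q + t).
Proof. apply S1_eq. destruct z as [[a b] H]; unfold rot; cbn [fst snd proj1_sig]. rewrite cos_plus, sin_plus. f_equal; ring. Qed.

Lemma dS1_rot z t t' : dS1 (rot z t) (rot z t') = sqrt (2 - 2 * cos (t - t')).
Proof.
  unfold dS1, rot. destruct z as [[a b] H]; cbn [fst snd proj1_sig] in *. f_equal.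
  rewrite cos_minus.
  replace ((a * cos t - b * sin t - (a * cos t' - b * sin t')) ^ 2 +
   (a * sin t + b * cos t - (a * sin t' + b * cos t')) ^ 2)
   with ((a^2+b^2) * ((cos t ^ 2 + sin t ^ 2) + (cos t' ^ 2 + sin t' ^2) - 2 * (cos t * cos t' + sin t * sin t'))) by ring.
  rewrite H, !sc. ring.
Qed.

Lemma dS1_sym p q : dS1 p q = dS1 q p.
Proof. unfold dS1. f_equal. ring. Qed.

Lemma dS1_refl p : dS1 p p = 0.
Proof. unfold dS1. replace (_ + _) with 0 by ring. apply sqrt_0. Qed.

Lemma dS1_pos p q : p <> q -> 0 < dS1 p q.
Proof.
  intros Hne. unfold dS1. apply sqrt_lt_R0.
  destruct p as [[a b] Hp], q as [[c d] Hq]; cbn [fst snd proj1_sig].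
  destruct (Req_dec a c) as [->|H1].
  - destruct (Req_dec b d) as [->|H2].
    + exfalso; apply Hne, S1_eq; reflexivity.
    + assert (0 < (b - d)^2). { simpl. rewrite Rmult_1_r. apply Rsqr_pos_lt. lra. } pose proof (pow2_ge_0 (c - c)); lra.
  - assert (0 < (a - c)^2). { simpl. rewrite Rmult_1_r. apply Rsqr_pos_lt. lra. }
    pose proof (pow2_ge_0 (b - d)); lra.
Qed.

Lemma tri2 u1 u2 v1 v2 :
  sqrt ((u1 + v1)^2 + (u2 + v2)^2) <= sqrt (u1^2 + u2^2) + sqrt (v1^2 + v2^2).
Proof.
  set (P := u1^2+u2^2). set (Q := v1^2+v2^2).
  assert (HP : 0 <= P) by (unfold P; pose proof (pow2_ge_0 u1); pose proof (pow2_ge_0 u2); lra).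
  assert (HQ : 0 <= Q) by (unfold Q; pose proof (pow2_ge_0 v1); pose proof (pow2_ge_0 v2); lra).
  pose proof (sqrt_pos P) as A0. pose proof (sqrt_pos Q) as B0.
  pose proof (sqrt_sqrt P HP) as A2. pose proof (sqrt_sqrt Q HQ) as B2.
  set (A := sqrt P) in *. set (B := sqrt Q) in *.
  assert (CS : u1*v1 + u2*v2 <= A * B).
  { assert (E : (A*B)^2 = P * Q) by (rewrite <- A2, <- B2; ring).
    assert (F : (u1*v1+u2*v2)^2 <= P*Q).
    { unfold P, Q. pose proof (pow2_ge_0 (u1*v2 - u2*v1)). replace ((u1 ^ 2 + u2 ^ 2) * (v1 ^ 2 + v2 ^ 2)) with ((u1*v1+u2*v2)^2 + (u1*v2 - u2*v1)^2) by ring. lra. }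
    assert (G : 0 <= A*B) by (apply Rmult_le_pos; auto).
    destruct (Rle_lt_dec (u1*v1+u2*v2) (A*B)) as [h|h]; auto.
    exfalso. nra. }
  rewrite <- (sqrt_pow2 (A + B)) by lra.
  apply sqrt_le_1_alt.
  replace ((A+B)^2) with (A*A + B*B + 2*(A*B)) by ring. rewrite A2, B2. unfold P, Q. nra.
Qed.

Lemma dS1_tri p q r : dS1 p r <= dS1 p q + dS1 q r.
Proof.
  unfold dS1.
  replace (fst (proj1_sig p) - fst (proj1_sig r)) with
    ((fst (proj1_sig p) - fst (proj1_sig q)) + (fst (proj1_sig q) - fst (proj1_sig r))) by ring.
  replace (snd (proj1_sig p) - snd (proj1_sig r)) with
    ((snd (proj1_sig p) - snd (proj1_sig q)) + (snd (proj1_sig q) - snd (proj1_sig r))) by ring.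
  apply tri2.
Qed.

Lemma sin_abs_le x : Rabs (sin x) <= Rabs x.
Proof.
  assert (Hb := SIN_bound x).
  destruct (Rle_lt_dec 1 (Rabs x)) as [h|h].
  { apply Rle_trans with 1; auto. apply Rabs_le; lra. }
  assert (PI2 := PI2_3_2).
  destruct (Rtotal_order x 0) as [hx|[hx|hx]].
  - rewrite Rabs_left in h by lra.
    assert (sin (-x) < -x) by (apply sin_lt_x; lra).
    assert (0 < sin (-x)) by (apply sin_gt_0; pose proof PI_RGT_0; pose proof PI2_1; lra).
    rewrite sin_neg in *. rewrite Rabs_left, Rabs_left; lra.
  - subst. rewrite sin_0. lra.
  - rewrite Rabs_right in h by lra.
    assert (sin x < x) by (apply sin_lt_x; lra).
    assert (0 < sin x) by (apply sin_gt_0; pose proof PI2_1; lra).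
    rewrite !Rabs_right; lra.
Qed.

Lemma chord_le h : sqrt (2 - 2 * cos h) <= Rabs h.
Proof.
  replace h with (2 * (h/2)) at 1 by field.
  rewrite cos_2a_sin.
  rewrite <- sqrt_Rsqr_abs. apply sqrt_le_1_alt.
  assert (Hs := sin_abs_le (h/2)).
  assert (E : Rsqr (sin (h/2)) <= Rsqr (h/2)).
  { rewrite (Rsqr_abs (sin _)), (Rsqr_abs (h/2)). apply Rsqr_incr_1; auto; apply Rabs_pos. }
  unfold Rsqr in *. nra.
Qed.

Lemma cos_abs t : cos (Rabs t) = cos t.
Proof. destruct (Rle_lt_dec 0 t). rewrite Rabs_right; lra. rewrite Rabs_left, cos_neg; lra. Qed.

Lemma cos_far t eta : 0 <= eta -> eta <= Rabs t <= PI -> cos t <= cos eta.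
Proof.
  intros H0 [H1 H2]. rewrite <- cos_abs. destruct (Req_dec eta (Rabs t)) as [<-|hne]; [lra|].
  left. apply cos_decreasing_1; lra.
Qed.

Lemma cos_near t eta : 0 <= eta <= PI -> Rabs t <= PI -> cos eta < cos t -> Rabs t < eta.
Proof.
  intros H0 H1 H2. destruct (Rlt_le_dec (Rabs t) eta) as [h|h]; auto.
  exfalso. pose proof (cos_far t eta ltac:(lra) (conj h H1)). lra.
Qed.

Lemma rot_inv z w : dS1 z w < 1 -> exists t, -(PI/2) < t < PI/2 /\ w = rot z t.
Proof.
  intros Hd. destruct z as [[a b] Hz], w as [[x y] Hw].
  unfold dS1 in Hd; cbn [fst snd proj1_sig] in *.
  set (X := a*x + b*y). set (Y := a*y - b*x).
  assert (HXY : X^2 + Y^2 = 1).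
  { unfold X, Y. replace ((a * x + b * y) ^ 2 + (a * y - b * x) ^ 2) with ((a^2+b^2)*(x^2+y^2)) by ring.
    rewrite Hz, Hw; ring. }
  assert (HD : (a - x)^2 + (b - y)^2 = 2 - 2*X).
  { unfold X. replace ((a - x) ^ 2 + (b - y) ^ 2) with ((a^2+b^2) + (x^2+y^2) - 2*(a*x+b*y)) by ring.
    rewrite Hz, Hw; ring. }
  rewrite HD in Hd.
  assert (HX : 1/2 < X).
  { destruct (Rle_lt_dec (2 - 2*X) 0) as [h|h]; [lra|].
    assert (2 - 2*X < 1); [|lra].
    rewrite <- sqrt_1 in Hd. apply sqrt_lt_0_alt in Hd. lra. }
  assert (HY : -1 <= Y <= 1).
  { pose proof (pow2_ge_0 X). split; nra. }
  exists (asin Y).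
  assert (Hs : sin (asin Y) = Y) by (apply sin_asin; auto).
  assert (Hc : cos (asin Y) = X).
  { rewrite cos_asin by auto. replace (1 - Y²) with (X^2) by (unfold Rsqr; lra).
    apply sqrt_pow2; lra. }
  pose proof (asin_bound Y) as Hb.
  split.
  - split.
    + destruct (Req_dec (asin Y) (-(PI/2))) as [e|e]; [|lra].
      rewrite e, cos_neg, cos_PI2 in Hc. lra.
    + destruct (Req_dec (asin Y) (PI/2)) as [e|e]; [|lra].
      rewrite e, cos_PI2 in Hc. lra.
  - apply S1_eq. unfold rot; cbn [fst snd proj1_sig]. rewrite Hs, Hc. unfold X, Y.
    f_equal.
    + replace (a * (a * x + b * y) - b * (a * y - b * x)) with ((a^2+b^2)*x) by ring. rewrite Hz; ring.
    + replace (a * (a * y - b * x) + b * (a * x + b * y)) with ((a^2+b^2)*y) by ring. rewrite Hz; ring.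
Qed.

Lemma cpt_elim (f : R -> R) x eps : continuity_pt f x -> 0 < eps ->
  exists del, 0 < del /\ forall y, Rabs (y - x) < del -> Rabs (f y - f x) < eps.
Proof.
  intros H He. destruct (H eps He) as [d [Hd Hy]]. exists d; split; auto.
  intros y Hyd. destruct (Req_dec y x) as [->|Hne].
  - rewrite Rminus_diag, Rabs_R0; auto.
  - apply (Hy y). split; [split; [exact I| auto] | exact Hyd].
Qed.

Lemma cpt_intro (f : R -> R) x :
  (forall eps, 0 < eps -> exists del, 0 < del /\ forall y, Rabs (y - x) < del -> Rabs (f y - f x) < eps) ->
  continuity_pt f x.
Proof.
  intros H eps He. destruct (H eps He) as [d [Hd Hy]]. exists d; split; auto.
  intros y [_ Hyd]. apply Hy. exact Hyd.
Qed.

Lemma ivt2 (f : R -> R) a b v : a <= b ->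
  (forall c, a <= c <= b -> continuity_pt f c) ->
  (f a < v < f b \/ f b < v < f a) -> exists c, a <= c <= b /\ f c = v.
Proof.
  intros Hab Hc Hv. destruct (Req_dec a b) as [<-|Hne].
  { exfalso; lra. }
  assert (a < b) by lra.
  destruct Hv as [Hv|Hv].
  - destruct (Ranalysis5.IVT_interv (fun x => f x - v) a b) as [c [Hc1 Hc2]]; auto; try lra.
    + intros c Hc'. apply continuity_pt_minus; [apply Hc; auto| apply continuity_pt_const; intros ? ?; auto].
    + exists c; split; auto; lra.
  - destruct (Ranalysis5.IVT_interv (fun x => v - f x) a b) as [c [Hc1 Hc2]]; auto; try lra.
    + intros c Hc'. apply continuity_pt_minus; [apply continuity_pt_const; intros ? ?; auto|apply Hc; auto].
    + exists c; split; auto; lra.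
Qed.

Definition fold_concl (f : R -> R) s u :=
  exists q eta, 0 < eta /\ s < q - eta /\ q + eta < u /\
    forall t, q - eta < t < q + eta -> exists t', s <= t' <= u /\ eta <= Rabs (t' - q) /\ f t' = f t.

Lemma fold_up (f : R -> R) s u : s < u -> (forall c, s <= c <= u -> continuity_pt f c) ->
  f s = f u -> (exists p, s <= p <= u /\ f s < f p) -> fold_concl f s u.
Proof.
  intros Hsu Hc Hfe [p [Hp Hfp]].
  destruct (ivt2 f s p ((f s + f p)/2)) as [q [Hq Hfq]]; try lra.
  { intros c Hc'; apply Hc; lra. }
  assert (Hqs : s < q). { destruct (Req_dec q s); [subst; lra| lra]. }
  assert (Hqp : q < p). { destruct (Req_dec q p); [subst; lra| lra]. }
  destruct (cpt_elim f q ((f p - f s)/2)) as [d [Hd Hy]]; [apply Hc; lra| lra|].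
  set (eta := Rmin d (Rmin ((q - s)/2) ((p-q)/2))).
  assert (He1 : eta <= d) by apply Rmin_l.
  assert (He2 : eta <= (q-s)/2) by (eapply Rle_trans; [apply Rmin_r| apply Rmin_l]).
  assert (He3 : eta <= (p-q)/2) by (eapply Rle_trans; [apply Rmin_r| apply Rmin_r]).
  assert (He0 : 0 < eta). { unfold eta. repeat apply Rmin_pos; lra. }
  exists q, eta. split; [lra|split;[lra|split;[lra|]]].
  intros t Ht. assert (Rabs (f t - f q) < (f p - f s)/2) by (apply Hy; apply Rabs_def1; lra).
  apply Rabs_def2 in H.
  destruct (ivt2 f p u (f t)) as [t' [Ht' Hft']]; try lra.
  { intros c Hc'; apply Hc; lra. }
  exists t'; split; [lra|split; auto].
  rewrite Rabs_right; lra.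
Qed.

Lemma fold_lemma (f : R -> R) s u : s < u -> (forall c, s <= c <= u -> continuity_pt f c) ->
  f s = f u -> fold_concl f s u.
Proof.
  intros Hsu Hc Hfe.
  destruct (classic (exists p, s <= p <= u /\ f s < f p)) as [Hup|Hnup].
  { apply fold_up; auto. }
  destruct (classic (exists p, s <= p <= u /\ f p < f s)) as [Hdn|Hndn].
  { destruct (fold_up (fun x => - f x) s u) as [q [eta [G1 [G2 [G3 G4]]]]]; auto.
    - intros c Hc'. apply continuity_pt_opp. auto.
    - lra.
    - destruct Hdn as [p [Hp Hfp]]. exists p; split; auto; lra.
    - exists q, eta. repeat split; auto. intros t Ht. destruct (G4 t Ht) as [t' [A [B C]]].
      exists t'; repeat split; auto; lra. }
  assert (Hall : forall p, s <= p <= u -> f p = f s).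
  { intros p Hp. destruct (Rtotal_order (f p) (f s)) as [Hl|[He|Hg]]; auto.
    - exfalso; apply Hndn; eauto.
    - exfalso; apply Hnup; eauto. }
  exists ((s+u)/2), ((u-s)/4). split; [lra|split;[lra|split;[lra|]]].
  intros t Ht. exists s. split; [lra|split].
  - rewrite Rabs_left; lra.
  - rewrite (Hall t); lra.
Qed.

Lemma cover_lemma (f : R -> R) a b c : a < c < b ->
  (forall x, a <= x <= b -> continuity_pt f x) ->
  (forall x y, a <= x <= b -> a <= y <= b -> x < y -> f x <> f y) ->
  exists eps, 0 < eps /\ forall v, Rabs (v - f c) < eps -> exists t, a <= t <= b /\ f t = v.
Proof.
  intros Hc Hcont Hinj.
  assert (Hopp : (f a < f c < f b) \/ (f b < f c < f a)).
  { assert (N1 : f a <> f c) by (apply Hinj; lra).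
    assert (N2 : f c <> f b) by (apply Hinj; lra).
    assert (N3 : f a <> f b) by (apply Hinj; lra).
    destruct (Rtotal_order (f a) (f c)) as [H1|[H1|H1]]; [|contradiction|];
    destruct (Rtotal_order (f c) (f b)) as [H2|[H2|H2]]; try contradiction; try tauto.
    - exfalso. destruct (Rtotal_order (f a) (f b)) as [H3|[H3|H3]]; try contradiction.
      + destruct (ivt2 f a c (f b)) as [t [Ht Hft]]; try lra.
        { intros; apply Hcont; lra. }
        apply (Hinj t b); lra.
      + destruct (ivt2 f c b (f a)) as [t [Ht Hft]]; try lra.
        { intros; apply Hcont; lra. }
        apply (Hinj a t); try lra. 
    - exfalso. destruct (Rtotal_order (f a) (f b)) as [H3|[H3|H3]]; try contradiction.
      + destruct (ivt2 f c b (f a)) as [t [Ht Hft]]; try lra.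
        { intros; apply Hcont; lra. }
        apply (Hinj a t); try lra.
      + destruct (ivt2 f a c (f b)) as [t [Ht Hft]]; try lra.
        { intros; apply Hcont; lra. }
        apply (Hinj t b); lra. }
  exists (Rmin (Rabs (f a - f c)) (Rabs (f b - f c))). split.
  { apply Rmin_pos; apply Rabs_pos_lt; lra. }
  intros v Hv.
  assert (Hm1 := Rmin_l (Rabs (f a - f c)) (Rabs (f b - f c))).
  assert (Hm2 := Rmin_r (Rabs (f a - f c)) (Rabs (f b - f c))).
  apply ivt2; [lra| intros; apply Hcont; lra|].
  destruct Hopp as [Ho|Ho].
  - rewrite (Rabs_left (f a - f c)), (Rabs_right (f b - f c)) in * by lra.
    apply Rabs_def2 in Hv. left; lra.
  - rewrite (Rabs_right (f a - f c)), (Rabs_left (f b - f c)) in * by lra.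
    apply Rabs_def2 in Hv. right; lra.
Qed.

Lemma dist_rot0 c t : dS1 c (rot c t) = sqrt (2 - 2 * cos t).
Proof.
  replace (dS1 c (rot c t)) with (dS1 (rot c 0) (rot c t)) by (rewrite rot0; reflexivity).
  rewrite dS1_rot. replace (0 - t) with (- t) by ring. rewrite cos_neg. reflexivity.
Qed.

Lemma eul_ball (X : Type) (g : S1 -> X) :
  (forall x : X, exists z : S1, g z = x) ->
  (forall A : S1 -> Prop, mclosed dS1 A -> (exists z, ~ A z) ->
     exists x : X, forall z, A z -> g z <> x) ->
  forall c r, 0 < r -> exists w0, dS1 c w0 < r /\ forall z, ~ (dS1 c z < r) -> g z <> g w0.
Proof.
  intros Hsurj Heul c r Hr.
  destruct (Heul (fun w => ~ (dS1 c w < r))) as [x' Hx'].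
  - intros w Hw. apply NNPP in Hw. exists (r - dS1 c w). split; [lra|].
    intros y Hy HA. apply HA. pose proof (dS1_tri c w y). lra.
  - exists c. rewrite dS1_refl. lra.
  - destruct (Hsurj x') as [w0 Hw0]. exists w0. split.
    + apply NNPP. intro HA. apply (Hx' w0 HA Hw0).
    + intros z Hz. rewrite Hw0. apply Hx'; auto.
Qed.

Theorem lemma2p1 (X : Type) (d : X -> X -> R) (g : S1 -> X) :
  peano_continuum d ->
  mcontinuous dS1 d g ->
  (forall x : X, exists z : S1, g z = x) ->
  (forall A : S1 -> Prop, mclosed dS1 A -> (exists z, ~ A z) ->
     exists x : X, forall z, A z -> g z <> x) ->
  forall x : X, (exists U, free_arc d U /\ U x) ->
    exists z : S1, g z = x /\ forall w : S1, g w = x -> w = z.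
Proof.
  intros _ Hg Hsurj Heul x [U [[HUo [[h [Hh1 [Hh2 [Hh3 [Hh4 Hh5]]]]] _]] HUx]].
  destruct (Hsurj x) as [z Hz]. exists z; split; auto.
  intros w Hw. apply NNPP; intro Hne.
  set (phi := fun y : S1 => epsilon (inhabits 0) (fun t => 0 < t < 1 /\ h t = g y)).
  assert (Fphi : forall y, U (g y) -> 0 < phi y < 1 /\ h (phi y) = g y).
  { intros y Hy. unfold phi. apply epsilon_spec. destruct (Hh2 _ Hy) as [t Ht]. eauto. }
  assert (Fcont : forall y eps, U (g y) -> 0 < eps -> exists del, 0 < del /\
            forall y', dS1 y y' < del -> U (g y') /\ Rabs (phi y' - phi y) < eps).
  { intros y eps Hy He. destruct (HUo _ Hy) as [rho [Hrho HUr]].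
    destruct (Fphi y Hy) as [Hp1 Hp2].
    destruct (Hh5 (phi y) eps Hp1 He) as [dh [Hdh Hdh']].
    destruct (Hg y (Rmin rho dh)) as [del [Hdel Hdel']]. { apply Rmin_pos; auto. }
    exists del; split; auto. intros y' Hy'.
    specialize (Hdel' y' Hy').
    assert (U (g y')) by (apply HUr; eapply Rlt_le_trans; [exact Hdel'| apply Rmin_l]).
    split; auto. destruct (Fphi y' H) as [Hq1 Hq2].
    apply Hdh'; auto. rewrite Hp2, Hq2. eapply Rlt_le_trans; [exact Hdel'| apply Rmin_r]. }
  assert (Fpc : forall c t, U (g (rot c t)) -> continuity_pt (fun s => phi (rot c s)) t).
  { intros c t Ht. apply cpt_intro. intros eps He.
    destruct (Fcont _ eps Ht He) as [del [Hdel H]]. exists del; split; auto.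
    intros y Hy. apply H. rewrite dS1_rot. eapply Rle_lt_trans; [apply chord_le|].
    rewrite Rabs_minus_sym; auto. }
  assert (StepA : forall c s u, s < u -> u - s <= PI -> (forall t, s <= t <= u -> U (g (rot c t))) ->
            phi (rot c s) <> phi (rot c u)).
  { intros c s u Hsu Hpi Hr Heq.
    destruct (fold_lemma (fun t => phi (rot c t)) s u Hsu) as [q [eta [He0 [He1 [He2 He3]]]]]; auto.
    set (eta' := Rmin eta (PI/4)).
    assert (Hpi0 := PI_RGT_0).
    assert (E1 : eta' <= eta) by apply Rmin_l.
    assert (E2 : eta' <= PI/4) by apply Rmin_r.
    assert (E0 : 0 < eta') by (apply Rmin_pos; lra).
    assert (Hc1 : cos (PI/3) < cos eta') by (apply cos_decreasing_1; lra).
    assert (Hc2 : cos eta' < cos 0) by (apply cos_decreasing_1; lra).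
    rewrite cos_PI3 in Hc1. rewrite cos_0 in Hc2.
    set (r := sqrt (2 - 2 * cos eta')).
    assert (Hr0 : 0 < r) by (apply sqrt_lt_R0; lra).
    assert (Hr1 : r < 1) by (rewrite <- sqrt_1; apply sqrt_lt_1_alt; lra).
    destruct (eul_ball X g Hsurj Heul (rot c q) r Hr0) as [w0 [Hw0 Hw0']].
    destruct (rot_inv (rot c q) w0 ltac:(lra)) as [th [Hth ->]].
    rewrite dist_rot0 in Hw0. apply sqrt_lt_0_alt in Hw0.
    assert (Hth' : Rabs th < eta') by (apply cos_near; try lra; apply Rabs_le; lra).
    apply Rabs_def2 in Hth'.
    destruct (He3 (q + th) ltac:(lra)) as [t' [Ht' [Ht'2 Ht'3]]].
    apply (Hw0' (rot c t')).
    - rewrite dS1_rot. apply Rle_not_lt. apply sqrt_le_1_alt.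
      assert (cos (q - t') <= cos eta'); [|lra].
      apply cos_far; try lra. rewrite Rabs_minus_sym. split; [lra|].
      apply Rabs_le. lra.
    - rewrite rot_rot.
      destruct (Fphi (rot c t')) as [_ A1]; [apply Hr; lra|].
      destruct (Fphi (rot c (q + th))) as [_ A2]; [apply Hr; lra|].
      rewrite <- A1, <- A2. f_equal. exact Ht'3. }
  assert (HD : 0 < dS1 z w) by (apply dS1_pos; auto).
  set (D := dS1 z w) in *.
  assert (Hzw : phi z = phi w).
  { destruct (Fphi z) as [A1 A2]; [rewrite Hz; auto|].
    destruct (Fphi w) as [B1 B2]; [rewrite Hw; auto|].
    apply Hh3; auto. rewrite A2, B2, Hz, Hw. reflexivity. }
  destruct (Fcont w 1) as [rho [Hrho Hrho']]; [rewrite Hw; auto| lra|].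
  assert (Hpi0 := PI_RGT_0).
  set (del := Rmin (rho/2) (Rmin (D/4) (PI/4))).
  assert (D1 : del <= rho/2) by apply Rmin_l.
  assert (D2 : del <= D/4) by (eapply Rle_trans; [apply Rmin_r| apply Rmin_l]).
  assert (D3 : del <= PI/4) by (eapply Rle_trans; [apply Rmin_r| apply Rmin_r]).
  assert (D0 : 0 < del) by (unfold del; repeat apply Rmin_pos; lra).
  assert (Hdr : forall t, Rabs t <= del -> dS1 w (rot w t) <= del).
  { intros t Ht. rewrite dist_rot0. eapply Rle_trans; [apply chord_le| auto]. }
  assert (Hrange : forall t, -del <= t <= del -> U (g (rot w t))).
  { intros t Ht. apply Hrho'. assert (Rabs t <= del) by (apply Rabs_le; lra).
    specialize (Hdr t H). lra. }
  destruct (cover_lemma (fun t => phi (rot w t)) (-del) del 0) as [eps [Heps Hcov]]; [lra| | |].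
  { intros t Ht. apply Fpc. apply Hrange; auto. }
  { intros a b Ha Hb Hab. apply StepA; [lra|lra|]. intros t Ht; apply Hrange; lra. }
  rewrite rot0 in Hcov.
  destruct (Fcont z eps) as [dz [Hdz Hdz']]; [rewrite Hz; auto| auto|].
  destruct (eul_ball X g Hsurj Heul z (Rmin dz (D/2))) as [w0 [Hw0 Hw0']].
  { apply Rmin_pos; lra. }
  assert (M1 := Rmin_l dz (D/2)). assert (M2 := Rmin_r dz (D/2)).
  destruct (Hdz' w0 ltac:(lra)) as [HU0 Hphi0].
  rewrite Hzw in Hphi0.
  destruct (Hcov (phi w0) Hphi0) as [t [Ht Hpt]].
  apply (Hw0' (rot w t)).
  - intro Hlt. assert (Rabs t <= del) by (apply Rabs_le; lra).
    specialize (Hdr t H). pose proof (dS1_tri z (rot w t) w). rewrite (dS1_sym (rot w t) w) in H0.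
    unfold D in *. lra.
  - destruct (Fphi (rot w t)) as [_ A1]; [apply Hrange; lra|].
    destruct (Fphi w0) as [_ A2]; auto.
    rewrite <- A1, <- A2. f_equal. exact Hpt.
Qed.
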